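(* For every constant specification $\mathsf{CS}$ for $\mathsf{LPC}^+$ there exist formulas $\phi,\psi$ and a term $t$ such that $\models_{\mathsf{LPC}^+_{\mathsf{CS}}}\phi\Leftrightarrow\psi$ but $\not\models_{\mathsf{LPC}^+_{\mathsf{CS}}} t{:}\phi\Leftrightarrow t{:}\psi$. (Indeed one may take $\phi = (p\wedge p)>p$, $\psi=p\vee\neg p$ and $t=x$ a justification variable.)
   Context: Language: countable sets $\mathsf{Const}$, $\mathsf{Var}$, $\mathsf{Prop}$; terms $t ::= c \mid x \mid t\cdot t \mid t+t \mid\ !t$; formulas $\phi ::= p \mid \neg\phi \mid \phi\wedge\phi \mid \phi\supset\phi \mid \phi>\phi \mid t{:}\phi$; $\mathsf{Tm},\mathsf{Fm}$ the sets of terms and formulas; $\phi\vee\psi:=\neg(\neg\phi\wedge\neg\psi)$, $\phi\Leftrightarrow\psi:=(\phi>\psi)\wedge(\psi>\phi)$. A constant specification $\mathsf{CS}$ is a set of formulas $c{:}\phi$ with $c\in\mathsf{Const}$ and $\phi$ an instance of the axiom schemes (A1) classical tautologies, (A2) $(\phi>(\psi\supset\chi))\supset((\phi>\psi)\supset(\phi>\chi))$, (A3) $\phi>\phi$, (A4) $(\phi>\psi)\supset(\phi\supset\psi)$, (A5) $(s{:}(\phi>\psi)\wedge t{:}\phi) > (s\cdot t){:}\psi$, (A6) $s{:}\phi > (s+t){:}\phi$, (A7) $t{:}\phi>(s+t){:}\phi$, (A8) $t{:}\phi>\phi$, (A9) $t{:}\phi > (!t){:}t{:}\phi$. A relational model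 is $\mathcal M=(W,W_N,R_{Fm},R_{Tm},V)$: $W$ a nonempty set, $W_N\subseteq W$ nonempty (normal states); $R_{Fm}$ assigns to each $\phi\in\mathsf{Fm}$ a relation $R_\phi\subseteq W_N\times W_N$; $R_{Tm}$ assigns to each $t\in\mathsf{Tm}$ a relation $R_t\subseteq W\times W$; $V$ assigns to each normal state $w$ a set $V(w)\subseteq\mathsf{Prop}$ and to each $w\in W\setminus W_N$ a set $V(w)\subseteq\mathsf{Fm}$. $R_\phi(w)$, $R_t(w)$ denote the sets of successors. Truth: at $w\in W\setminus W_N$, $\mathcal M,w\models\phi$ iff $\phi\in V(w)$; at $w\in W_N$: $p$ iff $p\in V(w)$; $\neg,\wedge,\supset$ classically; $\phi>\psi$ iff $R_\phi(w)\subseteq[\psi]$; $t{:}\phi$ iff $R_t(w)\subseteq[\phi]$, where $[\phi]=\{w\in W:\mathcal M,w\models\phi\}$. $\mathcal M$ is an $\mathsf{LPC}^+_{\mathsf{CS}}$-model if for all $w\in W_N$: (1) $R_\phi(w)\subseteq[\phi]$ for all $\phi$; (2) if $w\in[\phi]$ then $w\in R_\phi(w)$; (3) $R_c(w)\subseteq[\phi]$ for each $c{:}\phi\in\mathsf{CS}$; (4) $R_{s+t}(w)\subseteq R_s(w)\cap R_t(w)$; (5) for all $v\in R_{s\cdot t}(w)$ and all $\phi,\psi$: if $w\in[s{:}(\phi>\psi)\wedge t{:}\phi]$ then $v\in[\psi]$; (6) $wR_tw$ for all $t$; (7) for all $t$ and $v,u\in W$, if $wR_{!t}v$ and $vR_tu$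 then $wR_tu$. $\models_{\mathsf{LPC}^+_{\mathsf{CS}}}\phi$ means $\phi$ is true at every normal state of every $\mathsf{LPC}^+_{\mathsf{CS}}$-model. *)

(* Defs.v *)
From Stdlib Require Import Bool.

Inductive Tm : Type :=
  | TConst : nat -> Tm
  | TVar : nat -> Tm
  | TApp : Tm -> Tm -> Tm
  | TSum : Tm -> Tm -> Tm
  | TBang : Tm -> Tm.

Inductive Fm : Type :=
  | FAtom : nat -> Fm
  | FNeg : Fm -> Fm
  | FAnd : Fm -> Fm -> Fm
  | FImp : Fm -> Fm -> Fm
  | FCond : Fm -> Fm -> Fm    (* conditional > *)
  | FJust : Tm -> Fm -> Fm.

Definition FOr (a b : Fm) : Fm := FNeg (FAnd (FNeg a) (FNeg b)).
Definition FIff (a b : Fm) : Fm := FAnd (FCond a b) (FCond b a).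

Fixpoint beval (v : Fm -> bool) (f : Fm) : bool :=
  match f with
  | FAtom _ => v f
  | FNeg a => negb (beval v a)
  | FAnd a b => beval v a && beval v b
  | FImp a b => implb (beval v a) (beval v b)
  | FCond _ _ => v f
  | FJust _ _ => v f
  end.

Definition tautology (f : Fm) : Prop := forall v, beval v f = true.

Inductive axiom_inst : Fm -> Prop :=
  | ax1 : forall f, tautology f -> axiom_inst f
  | ax2 : forall a b c, axiom_inst
      (FImp (FCond a (FImp b c)) (FImp (FCond a b) (FCond a c)))
  | ax3 : forall a, axiom_inst (FCond a a)
  | ax4 : forall a b, axiom_inst (FImp (FCond a b) (FImp a b))
  | ax5 : forall s t a b, axiom_inst
      (FCond (FAnd (FJust s (FCond a b)) (FJust t a)) (FJust (TApp s t) b))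
  | ax6 : forall s t a, axiom_inst (FCond (FJust s a) (FJust (TSum s t) a))
  | ax7 : forall s t a, axiom_inst (FCond (FJust t a) (FJust (TSum s t) a))
  | ax8 : forall t a, axiom_inst (FCond (FJust t a) a)
  | ax9 : forall t a, axiom_inst (FCond (FJust t a) (FJust (TBang t) (FJust t a))).

Definition const_spec (CS : Fm -> Prop) : Prop :=
  forall f, CS f -> exists c a, f = FJust (TConst c) a /\ axiom_inst a.

Record model : Type := {
  W : Type;
  WN : W -> Prop;
  RFm : Fm -> W -> W -> Prop;
  RTm : Tm -> W -> W -> Prop;
  Vnorm : W -> nat -> Prop;             (* V(w) ⊆ Prop for normal w *)
  Vnon : W -> Fm -> Prop;               (* V(w) ⊆ Fm for non-normal w *)
  W_inhab : exists w, WN w;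
  RFm_normal : forall f w v, RFm f w v -> WN w /\ WN v
}.

Fixpoint sat (M : model) (w : W M) (f : Fm) : Prop :=
  (~ WN M w /\ Vnon M w f) \/
  (WN M w /\
   match f with
   | FAtom p => Vnorm M w p
   | FNeg a => ~ sat M w a
   | FAnd a b => sat M w a /\ sat M w b
   | FImp a b => sat M w a -> sat M w b
   | FCond a b => forall v, RFm M a w v -> sat M v b
   | FJust t a => forall v, RTm M t w v -> sat M v a
   end).

Definition LPCplus_model (CS : Fm -> Prop) (M : model) : Prop :=
  forall w : W M, WN M w ->
    (forall f v, RFm M f w v -> sat M v f) /\
    (forall f, sat M w f -> RFm M f w w) /\
    (forall c f, CS (FJust (TConst c) f) -> forall v, RTm M (TConst c) w v -> sat M v f) /\
    (forall s t v, RTm M (TSum s t) w v -> RTm M s w v /\ RTm M t w v) /\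
    (forall s t v a b, RTm M (TApp s t) w v ->
        sat M w (FAnd (FJust s (FCond a b)) (FJust t a)) -> sat M v b) /\
    (forall t, RTm M t w w) /\
    (forall t v u, RTm M (TBang t) w v -> RTm M t v u -> RTm M t w u).

Definition valid (CS : Fm -> Prop) (f : Fm) : Prop :=
  forall M : model, LPCplus_model CS M -> forall w : W M, WN M w -> sat M w f.

(* Main.v *)
Require Import Defs.
From Stdlib Require Import Bool Classical ClassicalEpsilon.

Definition pp := FAtom 0.
Definition phi0 := FCond (FAnd pp pp) pp.
Definition psi0 := FOr pp (FNeg pp).

Fixpoint ev (f : Fm) : Prop :=
  match f with
  | FAtom _ => False
  | FNeg a => ~ ev a
  | FAnd a b => ev a /\ ev b
  | FImp a b => ev a -> ev b
  | FCond a b => ev a -> ev b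
  | FJust t g => ev g /\ (t = TVar 0 -> g = psi0)
  end.

Definition M0 : model.
refine {| W := bool; WN := fun w => w = true;
  RFm := fun f w v => w = true /\ v = true /\ ev f;
  RTm := fun t w v => w = true /\ (v = true \/ (t = TVar 0 /\ v = false));
  Vnorm := fun _ _ => False;
  Vnon := fun _ f => f = psi0 |}.
- exists true; reflexivity.
- intros f w v [H1 [H2 _]]; auto.
Defined.

Lemma sat_false f : sat M0 false f <-> f = psi0.
Proof.
  destruct f; simpl; split;
  (intros [[_ H]|[H _]]; [exact H|discriminate]) || (intros H; left; split; [discriminate|exact H]).
Qed.

Lemma sat_true f : sat M0 true f <-> ev f.
Proof.
  induction f; simpl.
  - split; [intros [[H _]|[_ H]]; [exfalso; apply H; reflexivity|exact H]|contradiction].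
  - split; [intros [[H _]|[_ H]]; [exfalso; apply H; reflexivity|]|].
    + intro; apply H; apply IHf; auto.
    + intro H; right; split; [reflexivity|]. intro; apply H, IHf; auto.
  - split; [intros [[H _]|[_ [H1 H2]]]; [exfalso; apply H; reflexivity|]|].
    + split; [apply IHf1|apply IHf2]; auto.
    + intros [H1 H2]; right; split; [reflexivity|]; split; [apply IHf1|apply IHf2]; auto.
  - split; [intros [[H _]|[_ H]]; [exfalso; apply H; reflexivity|]|].
    + intro; apply IHf2, H, IHf1; auto.
    + intros H; right; split; [reflexivity|]; intro; apply IHf2, H, IHf1; auto.
  - split; [intros [[H _]|[_ H]]; [exfalso; apply H; reflexivity|]|].
    + intro; apply IHf2, H; simpl; auto.
    + intros H; right; split; [reflexivity|]. intros v [_ [Hv He]]; subst v; apply IHf2, H, He.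
  - split; [intros [[H _]|[_ H]]; [exfalso; apply H; reflexivity|]|].
    + split.
      * apply IHf, H; simpl; auto.
      * intro Ht; subst t; apply sat_false, H; simpl; auto.
    + intros [H1 H2]; right; split; [reflexivity|].
      intros v [_ [Hv|[Ht Hv]]]; subst v; [apply IHf; auto|apply sat_false; auto].
Qed.

Lemma taut_ev f : tautology f -> ev f.
Proof.
  intro H.
  set (v := fun g => if excluded_middle_informative (ev g) then true else false).
  assert (K : forall g, beval v g = true <-> ev g).
  { induction g; simpl;
    try (unfold v; destruct (excluded_middle_informative _); split; intros; (discriminate || contradiction || auto); fail).
    - rewrite negb_true_iff, <- not_true_iff_false. tauto.
    - rewrite andb_true_iff. tauto.
    - destruct (beval v g1), (beval v g2); simpl; tauto. }
  apply K, H.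
Qed.

Lemma ax_ev f : axiom_inst f -> ev f.
Proof.
  intro H; destruct H; simpl; try tauto.
  - apply taut_ev; auto.
  - intros [[H1 _] [H2 _]]; split; [auto|discriminate].
  - intros [H _]; split; [auto|discriminate].
  - intros [H _]; split; [auto|discriminate].
  - intros [H1 H2]; split; [split; auto|discriminate].
Qed.

Lemma M0_model CS : const_spec CS -> LPCplus_model CS M0.
Proof.
  intros HCS w Hw; simpl in Hw; subst w.
  split; [|split; [|split; [|split; [|split; [|split]]]]].
  - intros g v [_ [Hv He]]; subst v; apply sat_true; auto.
  - intros g Hs; simpl; split; [reflexivity|split; [reflexivity|apply sat_true; auto]].
  - intros c g Hc v [_ [Hv|[Hv _]]]; [|discriminate].
    subst v. destruct (HCS _ Hc) as [c' [a [E Ha]]]. injection E; intros; subst.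
    apply sat_true, ax_ev; auto.
  - intros s t v [_ [Hv|[Hv _]]]; [|discriminate]; subst; simpl; auto.
  - intros s t v a b [_ [Hv|[Hv _]]] Hs; [|discriminate]; subst.
    apply sat_true in Hs; simpl in Hs. apply sat_true. tauto.
  - simpl; auto.
  - intros t v u [_ [Hv|[Hv _]]] Hr; [|discriminate]; subst; exact Hr.
Qed.

Lemma satN (M : model) w a : WN M w -> sat M w (FNeg a) <-> ~ sat M w a.
Proof. intro Hw; simpl; split; [intros [[H _]|[_ H]]; [contradiction|exact H]|intro; right; auto]. Qed.
Lemma satA (M : model) w a b : WN M w -> sat M w (FAnd a b) <-> sat M w a /\ sat M w b.
Proof. intro Hw; simpl; split; [intros [[H _]|[_ H]]; [contradiction|exact H]|intro; right; auto]. Qed.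

Lemma sat_normal_or (M : model) w a b : WN M w -> sat M w (FOr a b) <-> ~ (~ sat M w a /\ ~ sat M w b).
Proof.
  intro Hw; unfold FOr. rewrite satN, satA, !satN by auto. tauto.
Qed.

Theorem mainTheorem5 :
  forall CS : Fm -> Prop, const_spec CS ->
  exists (phi psi : Fm) (t : Tm),
    valid CS (FIff phi psi) /\ ~ valid CS (FIff (FJust t phi) (FJust t psi)).
Proof.
  intros CS HCS. exists phi0, psi0, (TVar 0). split.
  - intros M HM w Hw. right; split; [auto|]. split.
    + right; split; [auto|]. intros v Hv.
      destruct (RFm_normal M _ _ _ Hv) as [_ Hvn].
      unfold psi0. apply sat_normal_or; auto.
      intros [A B]. apply B. right; split; auto.
    + right; split; [auto|]. intros v Hv.
      destruct (RFm_normal M _ _ _ Hv) as [_ Hvn].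
      right; split; [auto|]. intros u Hu.
      destruct (RFm_normal M _ _ _ Hu) as [_ Hun].
      destruct (HM v Hvn) as [H1 _].
      specialize (H1 _ _ Hu).
      destruct H1 as [[H _]|[_ [A _]]]; [contradiction|exact A].
  - intro H. specialize (H M0 (M0_model CS HCS) true eq_refl).
    apply sat_true in H. simpl in H. destruct H as [_ H].
    assert (E : ev phi0 /\ (TVar 0 = TVar 0 -> phi0 = psi0)).
    { apply H. split.
      - unfold psi0, FOr, pp; simpl; tauto.
      - auto. }
    destruct E as [_ E]. specialize (E eq_refl). discriminate.
Qed.
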